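(* Consider Algorithm 3 (described in the context) under the Standing Assumption and Matrix Assumption of the context. There exists a constant $\xi_{\min}>0$, independent of the run, such that in any run of the algorithm there exist $\bar k_\xi\in\mathbb{N}$ and $\bar\xi_{\min}\in[\xi_{\min},\bar\xi_{-1}]$ with $\bar\xi_k=\bar\xi_{\min}$ for all $k\ge\bar k_\xi$.
   Context: Problem: $\min_x f(x)$ s.t. $c(x)=0$, $f(x)=\mathbb{E}[F(x,\omega)]$, $c:\mathbb{R}^n\to\mathbb{R}^m$ deterministic. Notation: $g_k=\nabla f(x_k)$, $c_k=c(x_k)$, $J_k=\nabla c(x_k)^T$; $\Delta q(x,\tau,g,H,d)=-\tau(g^Td+\frac12\max\{d^THd,0\})+\|c(x)\|_1$. Standing Assumption: an open convex set $\mathcal X$ contains all iterates; $f$ is $C^1$, bounded below on $\mathcal X$, $\nabla f$ bounded and $L$-Lipschitz on $\mathcal X$; $c$, $\nabla c^T$ bounded on $\mathcal X$; $\nabla c_i$ is $\gamma_i$-Lipschitz on $\mathcal X$; singular values of $\nabla c(x)^T$ bounded away from zero uniformly over $\mathcal X$; $\Gamma:=\sum_i\gamma_i$. Matrix Assumption: deterministic symmetric $H_k$ with $\|H_k\|_2\le\kappa_H$ and $u^TH_ku\ge\zeta\|u\|_2^2$ whenever $J_ku=0$. Algorithm 3 (inputs $x_0$, $\bar\tau_{-1}>0$, $\epsilon,\sigma\in(0,1)$, $\bar\xi_{-1}>0$, $\{\beta_k\}\subset(0,1]$, $\theta\ge0$): at iteration $k$, obtain stochastic gradient $\bar g_k$;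 $(\bar d_k,\bar y_k)$ solves $H_k\bar d_k+J_k^T\bar y_k=-\bar g_k$, $J_k\bar d_k=-c_k$ (assumed $\bar d_k\neq0$). $\bar\tau_k^{trial}=\infty$ if $\bar g_k^T\bar d_k+\max\{\bar d_k^TH_k\bar d_k,0\}\le0$, else $\frac{(1-\sigma)\|c_k\|_1}{\bar g_k^T\bar d_k+\max\{\bar d_k^TH_k\bar d_k,0\}}$; $\bar\tau_k=\bar\tau_{k-1}$ if $\bar\tau_{k-1}\le\bar\tau_k^{trial}$, else $(1-\epsilon)\bar\tau_k^{trial}$. $\bar\xi_k^{trial}=\frac{\Delta q(x_k,\bar\tau_k,\bar g_k,H_k,\bar d_k)}{\bar\tau_k\|\bar d_k\|_2^2}$; $\bar\xi_k=\bar\xi_{k-1}$ if $\bar\xi_{k-1}\le\bar\xi_k^{trial}$, else $(1-\epsilon)\bar\xi_k^{trial}$. With $D_k=(\bar\tau_kL+\Gamma)\|\bar d_k\|_2^2$, $\hat a_k=\beta_k\Delta q(x_k,\bar\tau_k,\bar g_k,H_k,\bar d_k)/D_k$, $\tilde a_k=\hat a_k-4\|c_k\|_1/D_k$, project both onto $[a_k,a_k+\theta\beta_k^2]$ with $a_k=\frac{\beta_k\bar\xi_k\bar\tau_k}{\bar\tau_kL+\Gamma}$ to get $\widehat\alpha_k,\widetilde\alpha_k$; $\bar\alpha_k=\widehat\alpha_k$ if $\widehat\alpha_k<1$, $1$ if $\widetilde\alpha_k\le1\le\widehat\alpha_k$, $\widetilde\alpha_k$ if $\widetilde\alpha_k>1$;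 $x_{k+1}=x_k+\bar\alpha_k\bar d_k$. *)

(* Defs.v *)
From HB Require Import structures.
From mathcomp Require Import all_boot all_order all_algebra.
From mathcomp Require Import all_classical all_reals all_analysis.
Set Implicit Arguments. Unset Strict Implicit. Unset Printing Implicit Defensive.
Import Order.TTheory GRing.Theory Num.Theory.
Import numFieldNormedType.Exports.
Local Open Scope classical_set_scope.
Local Open Scope ring_scope.

Section Defs.
Variable R : realType.

Definition norm2 (p q : nat) (A : 'M[R]_(p, q)) : R :=
  Num.sqrt (\sum_(i < p) \sum_(j < q) (A i j) ^+ 2).

Definition norm1 (p : nat) (v : 'cV[R]_p) : R := \sum_(i < p) `|v i 0|.

Definition dotv (p : nat) (u v : 'cV[R]_p) : R := (u^T *m v) 0 0.

Definition quadf (p : nat) (H : 'M[R]_p) (d : 'cV[R]_p) : R := (d^T *m H *m d) 0 0.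

Definition Delta_q (n m : nat) (c : 'cV[R]_n -> 'cV[R]_m) (x : 'cV[R]_n) (tau : R)
  (g : 'cV[R]_n) (H : 'M[R]_n) (d : 'cV[R]_n) : R :=
  - tau * (dotv g d + 2^-1 * Num.max (quadf H d) 0) + norm1 (c x).

(* merit-parameter trial value; None encodes +infinity *)
Definition tau_trial (n m : nat) (c : 'cV[R]_n -> 'cV[R]_m) (sigma : R) (x : 'cV[R]_n)
  (g : 'cV[R]_n) (H : 'M[R]_n) (d : 'cV[R]_n) : option R :=
  let den := dotv g d + Num.max (quadf H d) 0 in
  if den <= 0 then None else Some ((1 - sigma) * norm1 (c x) / den).

Definition tau_update (eps tau_prev : R) (tr : option R) : R :=
  match tr with
  | None => tau_prev
  | Some t => if tau_prev <= t then tau_prev else (1 - eps) * t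
  end.

Definition xi_update (eps xi_prev xi_tr : R) : R :=
  if xi_prev <= xi_tr then xi_prev else (1 - eps) * xi_tr.

Definition proj_int (lo hi v : R) : R := Num.min (Num.max v lo) hi.

(* value at iteration k-1, with value v_m1 at index -1 *)
Definition prev (v_m1 : R) (v : nat -> R) (k : nat) : R :=
  if k is k'.+1 then v k' else v_m1.

Definition alg3_run (n m : nat) (c : 'cV[R]_n -> 'cV[R]_m) (J : 'cV[R]_n -> 'M[R]_(m, n))
  (L Gamma : R) (tau_m1 eps sigma xi_m1 theta : R) (beta : nat -> R)
  (gb : nat -> 'cV[R]_n) (H : nat -> 'M[R]_n)
  (x d : nat -> 'cV[R]_n) (y : nat -> 'cV[R]_m) (tau xi alpha : nat -> R) : Prop :=
  forall k : nat,
    H k *m d k + (J (x k))^T *m y k = - gb k /\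
        J (x k) *m d k = - c (x k) /\
        tau k = tau_update eps (prev tau_m1 tau k) (tau_trial c sigma (x k) (gb k) (H k) (d k)) /\
        xi k = xi_update eps (prev xi_m1 xi k)
                 (Delta_q c (x k) (tau k) (gb k) (H k) (d k) / (tau k * norm2 (d k) ^+ 2)) /\
        (let Dk := (tau k * L + Gamma) * norm2 (d k) ^+ 2 in
        let ahat := beta k * Delta_q c (x k) (tau k) (gb k) (H k) (d k) / Dk in
        let atil := ahat - 4 * norm1 (c (x k)) / Dk in
        let ak := beta k * xi k * tau k / (tau k * L + Gamma) in
        let alhat := proj_int ak (ak + theta * beta k ^+ 2) ahat in
        let altil := proj_int ak (ak + theta * beta k ^+ 2) atil in
        alpha k = (if alhat < 1 then alhat else if altil <= 1 then 1 else altil)) /\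
        x k.+1 = x k + alpha k *: d k.

End Defs.

(* Main.v *)
Require Import Defs.
From HB Require Import structures.
From mathcomp Require Import all_boot all_order all_algebra.
From mathcomp Require Import all_classical all_reals all_analysis.
From mathcomp Require Import ring lra.
From Stdlib Require Import Classical.
Import Order.TTheory GRing.Theory Num.Theory.
Import numFieldNormedType.Exports.
Set Implicit Arguments. Unset Strict Implicit. Unset Printing Implicit Defensive.
Local Open Scope classical_set_scope.
Local Open Scope ring_scope.

Section Aux.
Variable R : realType.

Definition sqv (p : nat) (v : 'cV[R]_p) : R := \sum_(i < p) (v i 0) ^+ 2.

Lemma sqv_ge0 p (v : 'cV[R]_p) : 0 <= sqv v.
Proof. by apply: sumr_ge0 => i _; apply: sqr_ge0. Qed.

Lemma norm2_ge0 p q (A : 'M[R]_(p, q)) : 0 <= norm2 A.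
Proof. exact: sqrtr_ge0. Qed.

Lemma norm2_sq p (v : 'cV[R]_p) : norm2 v ^+ 2 = sqv v.
Proof.
rewrite /norm2 sqr_sqrtr; last by apply: sumr_ge0 => i _; apply: sumr_ge0 => j _; apply: sqr_ge0.
by apply: eq_bigr => i _; rewrite big_ord1.
Qed.

Lemma sqv_eq0 p (v : 'cV[R]_p) : sqv v = 0 -> v = 0.
Proof.
move=> h; apply/matrixP => i j; rewrite (ord1 j) mxE.
move: h; rewrite /sqv => /psumr_eq0P h.
have /eqP := h (fun k _ => sqr_ge0 (v k 0)) i isT.
by rewrite sqrf_eq0 => /eqP.
Qed.

Lemma sqv_gt0 p (v : 'cV[R]_p) : v != 0 -> 0 < sqv v.
Proof.
move=> nz; rewrite lt_def sqv_ge0 andbT; apply/eqP => /sqv_eq0 h.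
by rewrite h eqxx in nz.
Qed.

Lemma dotvE p (u v : 'cV[R]_p) : dotv u v = \sum_i u i 0 * v i 0.
Proof. by rewrite /dotv mxE; apply: eq_bigr => i _; rewrite mxE. Qed.

Lemma dotvv p (u : 'cV[R]_p) : dotv u u = sqv u.
Proof. by rewrite dotvE; apply: eq_bigr => i _; rewrite expr2. Qed.

Lemma dotvC p (u v : 'cV[R]_p) : dotv u v = dotv v u.
Proof. by rewrite !dotvE; apply: eq_bigr => i _; rewrite mulrC. Qed.

Lemma dotvDr p (u v w : 'cV[R]_p) : dotv u (v + w) = dotv u v + dotv u w.
Proof. by rewrite !dotvE -big_split; apply: eq_bigr => i _; rewrite mxE mulrDr. Qed.

Lemma dotvDl p (u v w : 'cV[R]_p) : dotv (v + w) u = dotv v u + dotv w u.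
Proof. by rewrite dotvC dotvDr !(dotvC u). Qed.

Lemma dotvNl p (u v : 'cV[R]_p) : dotv (- u) v = - dotv u v.
Proof. by rewrite !dotvE -sumrN; apply: eq_bigr => i _; rewrite mxE mulNr. Qed.

Lemma dotvNr p (u v : 'cV[R]_p) : dotv u (- v) = - dotv u v.
Proof. by rewrite dotvC dotvNl dotvC. Qed.

Lemma dotv0r p (u : 'cV[R]_p) : dotv u 0 = 0.
Proof. by rewrite dotvE big1 // => i _; rewrite mxE mulr0. Qed.

Lemma dotv_tr p q (A : 'M[R]_(p, q)) (y : 'cV[R]_p) (d : 'cV[R]_q) :
  dotv (A^T *m y) d = dotv y (A *m d).
Proof. by rewrite /dotv trmx_mul trmxK mulmxA. Qed.

Lemma quadfE p (H : 'M[R]_p) d : quadf H d = dotv d (H *m d).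
Proof. by rewrite /quadf /dotv mulmxA. Qed.

Lemma dotv_sym p (H : 'M[R]_p) u v : H^T = H -> dotv v (H *m u) = dotv u (H *m v).
Proof.
by move=> hs; rewrite -dotv_tr hs dotvC.
Qed.

Lemma amgm p (u v : 'cV[R]_p) s : 0 < s -> 2 * dotv u v <= s * sqv u + sqv v / s.
Proof.
move=> s0; rewrite dotvE /sqv mulr_sumr mulr_sumr mulr_suml -big_split /=.
apply: ler_sum => i _.
set a := u i 0; set b := v i 0.
have h : 0 <= (s * a - b) ^+ 2 / s by apply: divr_ge0; [apply: sqr_ge0 | apply: ltW].
have e : (s * a - b) ^+ 2 / s = s * a ^+ 2 + b ^+ 2 / s - 2 * (a * b).
  by field; rewrite gt_eqF.
by rewrite -subr_ge0 -e.
Qed.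

Lemma sqvD p (u v : 'cV[R]_p) : sqv (u + v) <= 2 * sqv u + 2 * sqv v.
Proof.
rewrite /sqv !mulr_sumr -big_split; apply: ler_sum => i _ /=; rewrite mxE.
move: (u i 0) (v i 0) => a b.
have := sqr_ge0 (a - b); nra.
Qed.

Lemma sqv_norm1 p (v : 'cV[R]_p) : sqv v <= norm2 v * norm1 v.
Proof.
rewrite /sqv /norm1 mulr_sumr; apply: ler_sum => i _.
have hi : `|v i 0| <= norm2 v.
  have h1 : `|v i 0| ^+ 2 <= norm2 v ^+ 2.
    rewrite norm2_sq real_normK ?num_real //.
    rewrite /sqv (bigD1 i) //= lerDl; apply: sumr_ge0 => j _; apply: sqr_ge0.
  have := norm2_ge0 v; have := normr_ge0 (v i 0); nra.
rewrite -real_normK ?num_real // expr2; apply: ler_wpM2r => //.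
Qed.

Lemma norm2_0 p : norm2 (0 : 'cV[R]_p) = 0.
Proof.
have h : norm2 (0 : 'cV[R]_p) ^+ 2 = 0.
  by rewrite norm2_sq /sqv big1 // => i _; rewrite mxE expr0n.
by move/eqP: h; rewrite expf_eq0 /= => /eqP.
Qed.

Lemma norm2_le0 p (w : 'cV[R]_p) : norm2 w <= 0 -> w = 0.
Proof.
move=> h; apply: sqv_eq0; rewrite -norm2_sq.
have := norm2_ge0 w => h2; have -> : norm2 w = 0 by apply/eqP; rewrite eq_le h h2.
by rewrite expr0n.
Qed.

Lemma decomp m n (J : 'M[R]_(m, n)) smin : 0 < smin ->
  (forall w : 'cV_m, smin * norm2 w <= norm2 (J^T *m w)) ->
  forall c : 'cV_m, exists v : 'cV_n, J *m v = c /\ smin ^+ 2 * sqv v <= sqv c.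
Proof.
move=> s0 hs c.
have inj : forall w : 'cV_m, J^T *m w = 0 -> w = 0.
  move=> w hw; apply: norm2_le0.
  have := hs w; rewrite hw norm2_0 => h.
  by rewrite -(pmulr_rle0 _ s0).
set A := J *m J^T.
have kerA : forall w : 'cV_m, A *m w = 0 -> w = 0.
  move=> w hw; apply: inj; apply: sqv_eq0.
  by rewrite -dotvv dotv_tr mulmxA -/A hw dotv0r.
have symA : A^T = A by rewrite /A trmx_mul trmxK.
have uA : A \in unitmx.
  rewrite -row_free_unit -kermx_eq0; apply/eqP/row_matrixP => i; rewrite row0.
  set r := row i (kermx A).
  have hr : r *m A = 0 by rewrite /r -row_mul mulmx_ker row0.
  have : A *m r^T = 0 by rewrite -symA -trmx_mul hr trmx0.
  by move/kerA => h; rewrite -(trmxK r) h trmx0.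
set w := invmx A *m c.
exists (J^T *m w); split.
  by rewrite mulmxA -/A /w mulKVmx.
have e : sqv (J^T *m w) = dotv w c.
  by rewrite -dotvv dotv_tr mulmxA -/A /w mulKVmx.
have h1 := amgm w c (exprn_gt0 2 s0).
have h2 : smin ^+ 2 * sqv w <= sqv (J^T *m w).
  rewrite -!norm2_sq; have := hs w; have := norm2_ge0 w.
  move: (norm2 w) (norm2 (J^T *m w)) => a b ha hab.
  have hm : 0 <= smin * a by rewrite mulr_ge0 // ltW.
  nra.
have h3 : sqv c / smin ^+ 2 * smin ^+ 2 = sqv c by rewrite divfK // gt_eqF // exprn_gt0.
set V := sqv (J^T *m w) in e h2 *; set C := sqv c in h1 h3 *.
set s := smin ^+ 2 in h1 h2 h3 *.
have sp : 0 < s by rewrite /s exprn_gt0.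
set t := C / s in h1 h3.
have : V <= t by rewrite -e in h1; lra.
move=> hv; rewrite -h3 mulrC; apply: ler_wpM2r => //; lra.
Qed.

Lemma ev_const (s : nat -> R) a q : 0 < a -> q < 1 -> (forall k, a <= s k) ->
  (forall k, s k.+1 <= s k) -> (forall k, s k.+1 != s k -> s k.+1 <= q * s k) ->
  exists K, forall k, (K <= k)%N -> s k = s K.
Proof.
move=> a0 q1 hlb hdec hq.
set dl := (1 - q) * a.
have dl0 : 0 < dl by rewrite /dl mulr_gt0 // subr_gt0.
have step : forall k, s k.+1 != s k -> s k.+1 <= s k - dl.
  move=> k /hq h; have := hlb k; rewrite /dl => hk.
  have : 0 <= (1 - q) * (s k - a) by rewrite mulr_ge0 // subr_ge0 // ltW.
  nra.
have chain : forall k j, s (k + j)%N = s k \/ s (k + j)%N <= s k - dl.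
  move=> k; elim=> [|j IH]; first by left; rewrite addn0.
  rewrite addnS; have hd := hdec (k + j)%N.
  case: (eqVneq (s (k + j).+1) (s (k + j)%N)) => [e|ne].
    by rewrite e.
  right; have := step _ ne; case: IH => [->//|h]; lra.
case: (classic (exists K, forall k, (K <= k)%N -> s k = s K)) => // nK.
exfalso.
have hex : forall K, exists k, (K <= k)%N /\ s k <> s K.
  move=> K; apply: NNPP => hn; apply: nK; exists K => k hk.
  by apply: NNPP => hne; apply: hn; exists k.
have big : forall N : nat, exists k, s k <= s 0%N - N%:R * dl.
  elim=> [|N [k hk]]; first by exists 0%N; rewrite mul0r subr0.
  have [k' [hkk' hne]] := hex k.
  exists k'; have := chain k (k' - k)%N; rewrite subnKC //.
  case => // h; rewrite -natr1 mulrDl mul1r; lra.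
have s00 : 0 <= s 0%N / dl by rewrite divr_ge0 // ltW // (lt_le_trans a0).
have := archi_boundP s00; set N := Num.Def.archi_bound _ => hN.
have [k hk] := big N.
have : s 0%N < N%:R * dl by rewrite -ltr_pdivrMr.
have := hlb k; lra.
Qed.

Lemma norm1_ge0 p (v : 'cV[R]_p) : 0 <= norm1 v.
Proof. by apply: sumr_ge0 => i _. Qed.

Lemma norm1_eq0 p (v : 'cV[R]_p) : norm1 v = 0 -> v = 0.
Proof.
rewrite /norm1 => /psumr_eq0P h; apply/matrixP => i j; rewrite (ord1 j) mxE.
by apply/eqP; rewrite -normr_eq0; apply/eqP; apply: h.
Qed.

Lemma tau_step n m (c : 'cV[R]_n -> 'cV[R]_m) (J : 'M[R]_(m, n)) x g (H : 'M[R]_n) d y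
  zeta sigma eps prev :
  H *m d + J^T *m y = - g -> J *m d = - c x -> H^T = H ->
  (forall u, J *m u = 0 -> zeta * norm2 u ^+ 2 <= quadf H u) -> 0 < zeta ->
  0 < sigma < 1 -> 0 < eps < 1 -> 0 < prev ->
  let tau := tau_update eps prev (tau_trial c sigma x g H d) in
  0 < tau /\ tau <= prev /\
  tau * Num.max (quadf H d) 0 / 2 + sigma * norm1 (c x) <= Delta_q c x tau g H d.
Proof.
move=> hg hJ hs hnull z0 /andP[sg0 sg1] /andP[ep0 ep1] p0 tau.
have eg : g = - (H *m d + J^T *m y) by rewrite hg opprK.
have hgd : dotv g d = - quadf H d + dotv y (c x).
  by rewrite eg dotvNl dotvDl dotv_tr hJ dotvNr (dotvC (H *m d)) -quadfE opprD opprK.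
have C0 := norm1_ge0 (c x).
have hM0 : 0 <= Num.max (quadf H d) 0 by rewrite le_max lexx orbT.
have hMQ : quadf H d <= Num.max (quadf H d) 0 by rewrite le_max lexx.
rewrite /tau /Delta_q /tau_trial /=.
set Q := quadf H d in hgd hM0 hMQ *; set M := Num.max Q 0 in hM0 hMQ *.
set C1 := norm1 (c x) in C0 *; set gd := dotv g d in hgd *.
case: ifP => hden.
  rewrite /= lexx; split => //; split => //.
  have h : 0 <= prev * (- (gd + M)) by apply: mulr_ge0; [exact: ltW|rewrite oppr_ge0].
  nra.
have den0 : 0 < gd + M by rewrite ltNge hden.
have C1p : 0 < C1.
  rewrite lt_def C0 andbT; apply/eqP => e.
  have cx0 := norm1_eq0 e.
  have : J *m d = 0 by rewrite hJ cx0 oppr0.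
  move/hnull => hq.
  have hQ : 0 <= Q by apply: le_trans hq; apply: mulr_ge0; [exact: ltW|exact: sqr_ge0].
  move: den0; rewrite hgd cx0 dotv0r addr0 /M max_l //; lra.
set t := (1 - sigma) * C1 / (gd + M).
have t0 : 0 < t by rewrite /t divr_gt0 // mulr_gt0 // subr_gt0.
have htd : t * (gd + M) = (1 - sigma) * C1 by rewrite /t divfK // gt_eqF.
rewrite /tau_update -/t.
have [tau0 [taup taut]] : 0 < (if prev <= t then prev else (1 - eps) * t) /\
   (if prev <= t then prev else (1 - eps) * t) <= prev /\
   (if prev <= t then prev else (1 - eps) * t) <= t.
  case: ifP => hp; first by split => //; split.
  have : t < prev by rewrite ltNge hp.
  split; first by rewrite mulr_gt0 // subr_gt0.
  split; nra.
split => //; split => //.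
set ta := (if prev <= t then prev else (1 - eps) * t) in tau0 taup taut *.
have : ta * (gd + M) <= t * (gd + M) by apply: ler_wpM2r => //; apply: ltW.
nra.
Qed.

Lemma sqvN p (v : 'cV[R]_p) : sqv (- v) = sqv v.
Proof. by apply: eq_bigr => i _; rewrite mxE sqrrN. Qed.

Lemma xi_bound n m (J : 'M[R]_(m, n)) (H : 'M[R]_n) d (cx : 'cV[R]_m)
  (kap zeta smin Bc tau taum1 sigma Dq : R) :
  J *m d = - cx -> H^T = H -> (forall u : 'cV[R]_n, norm2 (H *m u) <= kap * norm2 u) ->
  (forall u : 'cV[R]_n, J *m u = 0 -> zeta * norm2 u ^+ 2 <= quadf H u) -> 0 < zeta ->
  0 < smin -> (forall w : 'cV[R]_m, smin * norm2 w <= norm2 (J^T *m w)) ->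
  norm2 cx <= Bc -> 0 < tau -> tau <= taum1 -> 0 < sigma ->
  tau * Num.max (quadf H d) 0 / 2 + sigma * norm1 cx <= Dq ->
  d != 0 ->
  let K := 2 * kap ^+ 2 / zeta + (1 + kap ^+ 2) / 2 in
  let K2 := (4 * K / zeta + 2) * Num.max Bc 0 / smin ^+ 2 in
  let Mc := 8 / zeta + K2 * taum1 / sigma in
  0 < Mc /\ 1 / Mc <= Dq / (tau * sqv d).
Proof.
move=> hJ hs hk hnull z0 s0 hsm hBc t0 tt1 sg0 hDq dn0 K K2 Mc.
have [v0 [hv0 hv0b]] := decomp s0 hsm cx.
set v := - v0.
have hv : J *m v = - cx by rewrite /v mulmxN hv0.
have hvb : smin ^+ 2 * sqv v <= sqv cx by rewrite /v sqvN.
set u := d - v.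
have hu : J *m u = 0 by rewrite /u mulmxBr hJ hv subrr.
have hd : d = u + v by rewrite /u subrK.
clearbody u.
have f1 : sqv d <= 2 * sqv u + 2 * sqv v by rewrite hd; apply: sqvD.
have f2 : zeta * sqv u <= dotv u (H *m u) by rewrite -quadfE -norm2_sq; apply: hnull.
have f3 : quadf H d = dotv u (H *m u) + 2 * dotv u (H *m v) + dotv v (H *m v).
  rewrite quadfE hd mulmxDr !dotvDl !dotvDr (dotv_sym _ _ hs); ring.
have z2 : 0 < zeta / 2 by rewrite divr_gt0.
have f4 := amgm (- u) (H *m v) z2.
rewrite dotvNl sqvN in f4.
have f5 := amgm (- v) (H *m v) ltr01.
rewrite dotvNl sqvN divr1 mul1r in f5.
have f6 : sqv (H *m v) <= kap ^+ 2 * sqv v.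
  rewrite -!norm2_sq; have := hk v; have := norm2_ge0 (H *m v); have := norm2_ge0 v.
  move: (norm2 v) (norm2 (H *m v)) => a b ha hb hab.
  have : 0 <= kap * a by apply: le_trans hab.
  nra.
have f8 : sqv cx <= Num.max Bc 0 * norm1 cx.
  apply: le_trans (sqv_norm1 cx) _; apply: ler_wpM2r; first exact: norm1_ge0.
  by apply: le_trans hBc _; rewrite le_max lexx.
have hM0 : 0 <= Num.max (quadf H d) 0 by rewrite le_max lexx orbT.
have hMQ : quadf H d <= Num.max (quadf H d) 0 by rewrite le_max lexx.
have C0 := norm1_ge0 cx.
have B0 : 0 <= Num.max Bc 0 by rewrite le_max lexx orbT.
have D0 : 0 < sqv d by apply: sqv_gt0.
move: f1 f2 f3 f4 f5 f6 hvb f8 hM0 hMQ C0 B0 D0 hDq.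
rewrite /Mc /K2 /K.
move: (sqv d) (sqv u) (sqv v) (sqv cx) (sqv (H *m v)) (dotv u (H *m u)) (dotv u (H *m v))
  (dotv v (H *m v)) (quadf H d) (Num.max (quadf H d) 0) (norm1 cx) (Num.max Bc 0) => 
  D U V C Hv a b e Q M C1 B f1 f2 f3 f4 f5 f6 hvb f8 hM0 hMQ C0 B0 D0 hDq.
have kk0 : 0 <= kap ^+ 2 by apply: sqr_ge0.
move: kk0 f6; move: (kap ^+ 2) => kk kk0 f6.
have s20 : 0 < smin ^+ 2 by rewrite exprn_gt0.
move: s20 hvb; rewrite /Mc /K2 /K; move: (smin ^+ 2) => ss s20 hvb.
have iz0 : 0 < zeta^-1 by rewrite invr_gt0.
have is0 : 0 < ss^-1 by rewrite invr_gt0.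
have ig0 : 0 < sigma^-1 by rewrite invr_gt0.
have ezi : zeta^-1 * zeta = 1 by rewrite mulVf // gt_eqF.
have esi : ss^-1 * ss = 1 by rewrite mulVf // gt_eqF.
have egi : sigma^-1 * sigma = 1 by rewrite mulVf // gt_eqF.
have e4 : Hv / (zeta / 2) = 2 * zeta^-1 * Hv by rewrite invf_div; ring.
rewrite e4 in f4.
move: iz0 is0 ig0 ezi esi egi f4.
move: (zeta^-1) (ss^-1) (sigma^-1) => iz isn ig iz0 is0 ig0 ezi esi egi f4.
set Kv := 2 * kk * iz + (1 + kk) / 2.
have Kv0 : 0 <= Kv by rewrite /Kv; nra.
have P1 : iz * Hv <= iz * (kk * V) by apply: ler_wpM2l => //; apply: ltW.
have S0 : Q >= zeta / 2 * U - Kv * V by rewrite /Kv; nra.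
have Z : 0 <= iz * (Q - zeta / 2 * U + Kv * V) by apply: mulr_ge0; [apply: ltW|lra].
have hU : iz * zeta * U = U by rewrite ezi mul1r.
have S1 : D <= 4 * iz * Q + (4 * Kv * iz + 2) * V by nra.
have S2 : V <= isn * (B * C1).
  have : isn * (ss * V) <= isn * (B * C1) by apply: ler_wpM2l; [apply: ltW|lra].
  by rewrite mulrA esi mul1r.
set K3 := (4 * Kv * iz + 2) * B * isn.
have K30 : 0 <= K3 by rewrite /K3 !mulr_ge0 // ?ltW //; nra.
have S3 : D <= 4 * iz * M + K3 * C1.
  have h1 : iz * Q <= iz * M by apply: ler_wpM2l => //; apply: ltW.
  have h2 : (4 * Kv * iz + 2) * V <= (4 * Kv * iz + 2) * (isn * (B * C1)).
    by apply: ler_wpM2l => //; nra.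
  rewrite /K3; nra.
set Mc' := 8 * iz + K3 * taum1 * ig.
have tm0 : 0 < taum1 by apply: lt_le_trans tt1.
have Mc0 : 0 < Mc'.
  have : 0 <= K3 * taum1 * ig by apply: mulr_ge0; [apply: mulr_ge0 => //; apply: ltW | apply: ltW].
  have : 0 < 8 * iz by rewrite mulr_gt0.
  rewrite /Mc'; lra.
split => //.
have tD0 : 0 < tau * D by rewrite mulr_gt0.
have S4 : tau * D <= tau * (4 * iz * M + K3 * C1) by apply: ler_wpM2l => //; apply: ltW.
have S5 : K3 * C1 * tau <= K3 * C1 * taum1 by apply: ler_wpM2l => //; rewrite mulr_ge0.
have S6 : Mc' * (tau * M / 2 + sigma * C1) <= Mc' * Dq by apply: ler_wpM2l => //; apply: ltW.
have e6 : Mc' * (tau * M / 2 + sigma * C1) = 4 * iz * tau * M + K3 * taum1 * C1 * (ig * sigma)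
   + 8 * iz * sigma * C1 + K3 * taum1 * ig * tau * M / 2 .
  by rewrite /Mc'; field.
rewrite egi mulr1 in e6.
have x1 : 0 <= 8 * iz * sigma * C1.
  apply: mulr_ge0 => //; apply: mulr_ge0; last exact: ltW.
  by apply: mulr_ge0 => //; exact: ltW.
have x2 : 0 <= K3 * taum1 * ig * tau * M / 2.
  apply: mulr_ge0 => //; apply: mulr_ge0 => //; apply: mulr_ge0; last exact: ltW.
  apply: mulr_ge0; [apply: mulr_ge0 => //; apply: ltW | apply: ltW].
  exact: tm0. exact: ig0.
have fin : tau * D <= Mc' * Dq by lra.
by rewrite ler_pdivlMr // mul1r ler_pdivrMl.
Qed.

Lemma xi_step (eps p tr lb m0 : R) : 0 < eps < 1 -> 0 < lb -> lb <= tr ->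
  m0 <= p -> m0 <= (1 - eps) * lb ->
  m0 <= xi_update eps p tr /\ xi_update eps p tr <= p /\
  (xi_update eps p tr != p -> xi_update eps p tr <= (1 - eps) * p).
Proof.
move=> /andP[e0 e1] l0 ltr hp hl; rewrite /xi_update; case: ifP => h.
  by split => //; split => //; rewrite eqxx.
have hlt : tr < p by rewrite ltNge h.
have e10 : 0 < 1 - eps by rewrite subr_gt0.
split; first by apply: le_trans hl _; apply: ler_wpM2l; [apply: ltW|].
split; first by nra.
by move=> _; apply: ler_wpM2l; [apply: ltW| apply: ltW].
Qed.
End Aux.
Unset Implicit Arguments.
Set Strict Implicit.

Theorem lemma3p4 (R : realType) (n m : nat)
  (X : set 'cV[R]_n) (f : 'cV[R]_n -> R) (gradf : 'cV[R]_n -> 'cV[R]_n)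
  (c : 'cV[R]_n -> 'cV[R]_m) (J : 'cV[R]_n -> 'M[R]_(m, n))
  (L : R) (gam : 'I_m -> R) (kappaH zeta : R)
  (tau_m1 eps sigma xi_m1 theta : R) (beta : nat -> R) :
  (* Standing Assumption *)
  open X -> convex_set X ->
  (forall x, X x -> differentiable f x /\ forall v, 'D_v f x = dotv (gradf x) v) ->
  {within X, continuous gradf} ->
  (exists fmin : R, forall x, X x -> fmin <= f x) ->
  (exists Bg : R, forall x, X x -> norm2 (gradf x) <= Bg) ->
  (forall x z, X x -> X z -> norm2 (gradf x - gradf z) <= L * norm2 (x - z)) ->
  (forall x, X x -> differentiable c x /\ forall v, 'D_v c x = J x *m v) ->
  (exists Bc : R, forall x, X x -> norm2 (c x) <= Bc) ->
  (exists BJ : R, forall x, X x -> norm2 (J x) <= BJ) ->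
  (forall i x z, X x -> X z ->
     norm2 (row i (J x) - row i (J z)) <= gam i * norm2 (x - z)) ->
  (exists smin : R, 0 < smin /\
     forall x (w : 'cV[R]_m), X x -> smin * norm2 w <= norm2 ((J x)^T *m w)) ->
  (* Matrix Assumption constants *)
  0 < zeta ->
  (* Algorithm inputs *)
  0 < tau_m1 -> 0 < eps < 1 -> 0 < sigma < 1 -> 0 < xi_m1 ->
  (forall k, 0 < beta k <= 1) -> 0 <= theta ->
  exists xi_min : R, 0 < xi_min /\
  forall (gb : nat -> 'cV[R]_n) (H : nat -> 'M[R]_n)
         (x d : nat -> 'cV[R]_n) (y : nat -> 'cV[R]_m) (tau xi alpha : nat -> R),
    (forall k, X (x k)) ->
    (* Matrix Assumption along the run *)
    (forall k, (H k)^T = H k /\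
       (forall u : 'cV[R]_n, norm2 (H k *m u) <= kappaH * norm2 u) /\
       (forall u : 'cV[R]_n, J (x k) *m u = 0 -> zeta * norm2 u ^+ 2 <= quadf (H k) u)) ->
    (forall k, d k != 0) ->
    alg3_run c J L (\sum_i gam i) tau_m1 eps sigma xi_m1 theta beta gb H x d y tau xi alpha ->
    exists (kxi : nat) (xib_min : R),
      xi_min <= xib_min <= xi_m1 /\ forall k, (kxi <= k)%N -> xi k = xib_min.
Proof.
Proof.
move=> _ _ _ _ _ _ _ _ [Bc hBc] _ _ [smin [s0 hsm]] z0 tm0 hep hsig xim0 hbeta th0.
have /andP[ep0 ep1] := hep; have /andP[sg0 sg1] := hsig.
set K := 2 * kappaH ^+ 2 / zeta + (1 + kappaH ^+ 2) / 2.
set K2 := (4 * K / zeta + 2) * Num.max Bc 0 / smin ^+ 2.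
set Mc := 8 / zeta + K2 * tau_m1 / sigma.
have K0 : 0 <= K.
  have k2 := sqr_ge0 kappaH.
  rewrite /K; apply: addr_ge0; apply: divr_ge0 => //;
    [apply: mulr_ge0 => // | exact: ltW | apply: addr_ge0 => //].
have K20 : 0 <= K2.
  rewrite /K2; apply: divr_ge0; last by rewrite ltW // exprn_gt0.
  apply: mulr_ge0; last by rewrite le_max lexx orbT.
  by apply: addr_ge0 => //; apply: divr_ge0; [apply: mulr_ge0 | exact: ltW].
have Mc0 : 0 < Mc.
  have a : 0 < 8 / zeta by rewrite divr_gt0.
  have b : 0 <= K2 * tau_m1 / sigma.
    by apply: divr_ge0; [apply: mulr_ge0 => //; exact: ltW | exact: ltW].
  rewrite /Mc; lra.
set lb := 1 / Mc.
have lb0 : 0 < lb by rewrite /lb divr_gt0.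
set m0 := Num.min xi_m1 ((1 - eps) * lb).
have m00 : 0 < m0 by rewrite /m0 lt_min xim0 mulr_gt0 // subr_gt0.
have m0l : m0 <= xi_m1 by rewrite ge_min lexx.
have m0r : m0 <= (1 - eps) * lb by rewrite ge_min lexx orbT.
exists m0; split => //.
move=> gb H x d y tau xi alpha hX hH hd hrun.
have TS : forall k, 0 < Defs.prev tau_m1 tau k ->
  0 < tau k /\ tau k <= Defs.prev tau_m1 tau k /\
  tau k * Num.max (quadf (H k) (d k)) 0 / 2 + sigma * norm1 (c (x k)) <=
    Delta_q c (x k) (tau k) (gb k) (H k) (d k).
  move=> k hp; have [e1 [e2 [e3 _]]] := hrun k; rewrite e3.
  have [hs [_ hn]] := hH k.
  exact: (tau_step e1 e2 hs hn z0 hsig hep hp).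
have Tb : forall k, 0 < tau k /\ tau k <= tau_m1.
  elim=> [|k [IH1 IH2]].
    by have [h1 [h2 _]] := TS 0%N tm0.
  have [h1 [h2 _]] := TS k.+1 IH1; split => //; exact: le_trans h2 IH2.
have Pp : forall k, 0 < Defs.prev tau_m1 tau k by case => [|k] //=; case: (Tb k).
have XB : forall k, lb <= Delta_q c (x k) (tau k) (gb k) (H k) (d k) / (tau k * norm2 (d k) ^+ 2).
  move=> k; have [e1 [e2 _]] := hrun k.
  have [hs [hk hn]] := hH k.
  have [t0 tt1] := Tb k.
  have [_ [_ hDq]] := TS k (Pp k).
  have hsm' : forall w : 'cV[R]_m, smin * norm2 w <= norm2 ((J (x k))^T *m w).
    by move=> w; apply: hsm; apply: hX.
  have := xi_bound e2 hs hk hn z0 s0 hsm' (hBc _ (hX k)) t0 tt1 sg0 hDq (hd k).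
  by rewrite -/K -/K2 -/Mc norm2_sq => -[].
have XS : forall k, m0 <= Defs.prev xi_m1 xi k -> m0 <= xi k /\ xi k <= Defs.prev xi_m1 xi k /\
   (xi k != Defs.prev xi_m1 xi k -> xi k <= (1 - eps) * Defs.prev xi_m1 xi k).
  move=> k hp; have [_ [_ [_ [e4 _]]]] := hrun k; rewrite e4.
  by apply: (@xi_step _ _ _ _ lb).
have Xb : forall k, m0 <= xi k /\ xi k <= xi_m1.
  elim=> [|k [IH1 IH2]].
    have [h1 [h2 _]] := XS 0%N m0l; split => //.
  have [h1 [h2 _]] := XS k.+1 IH1; split => //; exact: le_trans h2 IH2.
have [K0' hK] : exists K, forall k, (K <= k)%N -> xi k = xi K.
  apply: (@ev_const _ xi m0 (1 - eps)) => //.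
  - lra.
  - by move=> k; case: (Xb k).
  - by move=> k; have [_ [h _]] := XS k.+1 (proj1 (Xb k)).
  - by move=> k; have [_ [_ h]] := XS k.+1 (proj1 (Xb k)).
exists K0', (xi K0'); split => //.
by have [h1 h2] := Xb K0'; rewrite h1 h2.
Qed.
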